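(* Let $\varrho$ be a three-qubit state on parties $A,B,C$ that can be prepared in the triangle network. If $\langle Z_AZ_B\rangle_\varrho+\langle Z_BZ_C\rangle_\varrho-1\ge 0$, then $$\langle X_AX_BX_C\rangle_\varrho^2+\big(\langle Z_AZ_B\rangle_\varrho+\langle Z_BZ_C\rangle_\varrho-1\big)^2\le 1.$$
   Context: $X,Y,Z$ are Pauli matrices; $X_AX_BX_C=\sigma_x\otimes\sigma_x\otimes\sigma_x$, $Z_AZ_B=\sigma_z\otimes\sigma_z\otimes\mathbb 1$, etc., and $\langle O\rangle_\varrho=\mathrm{Tr}(O\varrho)$. Triangle network: three sources $\varrho_a,\varrho_b,\varrho_c$ (finite-dimensional, arbitrary dimension), each bipartite, shared respectively by $BC$, $AC$, $AB$. A state can be prepared in the triangle network if $\varrho=\sum_\lambda p_\lambda\,\mathcal E_A^{(\lambda)}\otimes\mathcal E_B^{(\lambda)}\otimes\mathcal E_C^{(\lambda)}[\varrho_a\otimes\varrho_b\otimes\varrho_c]$ (subsystems suitably ordered), with a probability distribution $p_\lambda$ and quantum channels $\mathcal E_X^{(\lambda)}$ mapping the two subsystems received by party $X$ to a qubit. *)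

(* Defs.v *)
From HB Require Import structures.
From mathcomp Require Import all_boot all_order all_algebra.
From mathcomp.real_closed Require Import complex.
Set Implicit Arguments. Unset Strict Implicit. Unset Printing Implicit Defensive.
Import Order.TTheory GRing.Theory Num.Theory.
Local Open Scope ring_scope.

Section Quantum.
Variable R : rcfType.
Local Notation C := R[i].

Definition op (I : finType) := I -> I -> C.

(* positive semidefinite: <v|rho|v> >= 0 for every vector v (the order on C:
   0 <= z iff z is real and nonnegative) *)
Definition psd (I : finType) (rho : op I) : Prop :=
  forall v : I -> C, 0 <= \sum_i \sum_j conjc (v i) * rho i j * v j.

Definition trace (I : finType) (rho : op I) : C := \sum_i rho i i.

Definition is_state (I : finType) (rho : op I) : Prop :=
  psd rho /\ trace rho = 1.

Definition expect (I : finType) (O rho : op I) : C :=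
  \sum_i \sum_j O i j * rho j i.

(* A quantum channel from C^I to a qubit C^bool, in Kraus (operator-sum) form:
   Kraus operators K k : bool x I matrices, sum_k K_k^dagger K_k = 1. *)
Definition is_channel (K I : finType) (E : K -> bool -> I -> C) : Prop :=
  forall i j : I, \sum_k \sum_o conjc (E k o i) * E k o j = (i == j)%:R.

(* Pauli matrices (basis index false = |0>, true = |1>) and identity *)
Definition pauliX : op bool := fun i j => (i != j)%:R.
Definition pauliZ : op bool :=
  fun i j => if i == j then (if i then -1 else 1) else 0.
Definition id2 : op bool := fun i j => (i == j)%:R.

Definition tens3 (P Q S : op bool) : op (bool * bool * bool)%type :=
  fun x y => P x.1.1 y.1.1 * Q x.1.2 y.1.2 * S x.2 y.2.

(* Source a (shared by B,C) lives on aB x aC,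
   source b (shared by A,C) on bA x bC, source c (shared by A,B) on cA x cB.
   Party A receives bA x cA, party B receives aB x cB, party C receives aC x bC.
   tri_out computes (E_A (x) E_B (x) E_C)[rho_a (x) rho_b (x) rho_c] with the
   subsystems reordered accordingly, each channel given by Kraus operators. *)
Definition tri_out (aB aC bA bC cA cB KA KB KC : finType)
  (EA : KA -> bool -> (bA * cA)%type -> C)
  (EB : KB -> bool -> (aB * cB)%type -> C)
  (EC : KC -> bool -> (aC * bC)%type -> C)
  (rhoa : op (aB * aC)%type) (rhob : op (bA * bC)%type) (rhoc : op (cA * cB)%type)
  : op (bool * bool * bool)%type :=
  fun x y =>
    \sum_(kA : KA) \sum_(kB : KB) \sum_(kC : KC)
    \sum_(i : ((bA * cA) * (aB * cB) * (aC * bC))%type)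
    \sum_(j : ((bA * cA) * (aB * cB) * (aC * bC))%type)
      (EA kA x.1.1 i.1.1 * EB kB x.1.2 i.1.2 * EC kC x.2 i.2) *
      (rhoa (i.1.2.1, i.2.1) (j.1.2.1, j.2.1) *
       rhob (i.1.1.1, i.2.2) (j.1.1.1, j.2.2) *
       rhoc (i.1.1.2, i.1.2.2) (j.1.1.2, j.1.2.2)) *
      (conjc (EA kA y.1.1 j.1.1) * conjc (EB kB y.1.2 j.1.2) *
       conjc (EC kC y.2 j.2)).

(* rho can be prepared in the triangle network: fixed sources of arbitrary
   finite dimension, and a (finite) probability distribution p over lambda of
   products of local channels. *)
Definition triangle_preparable (rho : op (bool * bool * bool)%type) : Prop :=
  exists (aB aC bA bC cA cB : finType)
         (rhoa : op (aB * aC)%type) (rhob : op (bA * bC)%type) (rhoc : op (cA * cB)%type),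
    [/\ is_state rhoa, is_state rhob & is_state rhoc] /\
  exists (L KA KB KC : finType) (p : L -> R)
         (EA : L -> KA -> bool -> (bA * cA)%type -> C)
         (EB : L -> KB -> bool -> (aB * cB)%type -> C)
         (EC : L -> KC -> bool -> (aC * bC)%type -> C),
    [/\ (forall l, 0 <= p l), \sum_l p l = 1,
        (forall l, is_channel (EA l) /\ is_channel (EB l) /\ is_channel (EC l)) &
        forall x y, rho x y =
          \sum_l ((p l)%:C)%C * tri_out (EA l) (EB l) (EC l) rhoa rhob rhoc x y].

End Quantum.

(* Main.v *)
Require Import Defs.
From HB Require Import structures.
From mathcomp Require Import all_boot all_order all_algebra.
From mathcomp.real_closed Require Import complex.
From mathcomp Require Import sesquilinear spectral.
From mathcomp.algebra_tactics Require Import ring lra.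
Import Order.TTheory GRing.Theory Num.Theory.
Set Implicit Arguments. Unset Strict Implicit. Unset Printing Implicit Defensive.
Local Open Scope ring_scope.

Section Gen.
Variable R : rcfType.
Local Notation C := R[i].

Lemma conjcE (x : C) : conjc x = x^*.
Proof.
have [->|nz] := eqVneq x 0; first by rewrite conjc0 conjC0.
by apply: (mulfI nz); rewrite -sqr_normc normCK.
Qed.

Lemma sum_delta (I : finType) (j : I) (F : I -> C) :
  \sum_i ((i == j)%:R * F i) = F j.
Proof.
rewrite (bigD1 j) //= eqxx mul1r big1 ?addr0 // => i /negbTE ->.
by rewrite mul0r.
Qed.

Lemma sum_delta' (I : finType) (j : I) (F : I -> C) :
  \sum_i ((j == i)%:R * F i) = F j.
Proof. by rewrite -(sum_delta j); apply: eq_bigr => i _; rewrite eq_sym. Qed.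

Lemma sum_delta_r (I : finType) (i : I) (F : I -> C) :
  \sum_j (F j * (i == j)%:R) = F i.
Proof. by rewrite -(sum_delta' i); apply: eq_bigr => j _; rewrite mulrC. Qed.

Definition bf (I : finType) (K : op R I) (u w : I -> C) :=
  \sum_i \sum_j (u i)^* * K i j * w j.
Definition qf (I : finType) (K : op R I) (u : I -> C) := bf K u u.

Lemma qfE (I : finType) (K : op R I) (u : I -> C) :
  \sum_i \sum_j conjc (u i) * K i j * u j = qf K u.
Proof. by apply: eq_bigr => i _; apply: eq_bigr => j _; rewrite conjcE. Qed.

Lemma psdE (I : finType) (K : op R I) : psd K <-> forall u, 0 <= qf K u.
Proof. by rewrite /psd; split=> H u; have := H u; rewrite qfE. Qed.

Lemma qf_lin (I : finType) (K : op R I) (u w : I -> C) (a b : C) :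
  qf K (fun i => a * u i + b * w i) =
  a^* * a * qf K u + a^* * b * bf K u w + b^* * a * bf K w u + b^* * b * qf K w.
Proof.
rewrite /qf /bf !mulr_sumr -!big_split /=; apply: eq_bigr => i _.
rewrite !mulr_sumr -!big_split /=; apply: eq_bigr => j _.
rewrite rmorphD !rmorphM /=; ring.
Qed.

Lemma bf_delta (I : finType) (K : op R I) (i j : I) :
  bf K (fun k => (k == i)%:R) (fun k => (k == j)%:R) = K i j.
Proof.
rewrite /bf; under eq_bigr => k _ do under eq_bigr => l _ do
  rewrite conjC_nat mulrC mulrA.
rewrite (eq_bigr (fun k => (k == i)%:R * \sum_l (l == j)%:R * K k l)).
  by rewrite sum_delta sum_delta.
by move=> k _; rewrite mulr_sumr; apply: eq_bigr => l _; ring.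
Qed.

Lemma ge0_real (z : C) : 0 <= z -> z^* = z.
Proof. by move=> /ger0_real /CrealP. Qed.

Lemma psd_herm (I : finType) (K : op R I) : psd K ->
  forall i j, K j i = (K i j)^*.
Proof.
move=> /psdE H i j.
pose di := fun k : I => (k == i)%:R : C.
pose dj := fun k : I => (k == j)%:R : C.
have E1 := ge0_real (H (fun k => 1 * di k + 1 * dj k)).
have E2 := ge0_real (H (fun k => 1 * di k + 'i * dj k)).
have Ei := ge0_real (H di). have Ej := ge0_real (H dj).
rewrite !qf_lin /di /dj !bf_delta in E1 E2.
rewrite /qf /di /dj !bf_delta in Ei Ej.
rewrite /qf !bf_delta in E1 E2.
rewrite !rmorphD !rmorphM /= !conjCK conjCi conjC1 Ei Ej in E1 E2.
move/eqP: E1; rewrite -subr_eq0 => /eqP E1.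
move/eqP: E2; rewrite -subr_eq0 => /eqP E2.
set a := K i j in E1 E2 *; set b := K j i in E1 E2 *.
have h1 : a^* + b^* - a - b = 0 by rewrite -E1; ring.
have h2 : 'i * (b^* - a^* - a + b) = 0.
  by rewrite -E2; ring.
have h3 : b^* - a^* - a + b = 0.
  by move: h2 => /eqP; rewrite mulf_eq0 (negbTE (neq0Ci _)) => /eqP.
have h4 : b^* - a = 0.
  apply/eqP; rewrite -(@mulrI_eq0 _ 2) ?pnatr_eq0 //; last by apply/lregP; rewrite pnatr_eq0.
  by apply/eqP; rewrite -[RHS](addr0 0) -{1}h1 -{1}h3; ring.
by rewrite -[b]conjCK; congr (_^*); apply/eqP; rewrite -subr_eq0 h4.
Qed.
Lemma bf_conj (I : finType) (K : op R I) u w : psd K ->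
  bf K w u = (bf K u w)^*.
Proof.
move=> /psd_herm H; rewrite /bf rmorph_sum /= exchange_big /=.
apply: eq_bigr => j _; rewrite rmorph_sum; apply: eq_bigr => i _.
by rewrite !rmorphM /= conjCK -H; ring.
Qed.

Lemma qf_ge0 (I : finType) (K : op R I) u : psd K -> 0 <= qf K u.
Proof. by move=> /psdE. Qed.

Lemma CS (I : finType) (K : op R I) u w : psd K ->
  `|bf K u w| ^+ 2 <= qf K u * qf K w.
Proof.
move=> pK; set z := bf K u w; set a := qf K u; set b := qf K w.
have a0 : 0 <= a by exact: qf_ge0. have b0 : 0 <= b by exact: qf_ge0.
have ar : a^* = a by exact: ge0_real. have br : b^* = b by exact: ge0_real.
have key : forall l, 0 <= a + l * z + l^* * z^* + l^* * l * b.
  move=> l; have := qf_ge0 (fun i => 1 * u i + l * w i) pK.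
  by rewrite qf_lin -/a -/b -/z (bf_conj _ _ pK) -/z conjC1 !mul1r !mulr1.
rewrite normCK.
have [->|z0] := eqVneq z 0; first by rewrite mul0r mulr_ge0.
have [bz|bn0] := eqVneq b 0.
  exfalso; have := key (- (a + 1) / z).
  rewrite bz mulr0 addr0 rmorphM rmorphN /= rmorphD /= ar conjC1 fmorphV /=.
  have zc : z^* != 0 by rewrite conjC_eq0.
  rewrite !divfK // (_ : a + - (a + 1) + - (a + 1) = - a - 2); last by ring.
  move=> h; have : 0 <= a + (- a - 2) by rewrite addr_ge0.
  by rewrite addrA addrN sub0r oppr_ge0 => /(lt_le_trans (ltr0Sn _ 1)); rewrite ltxx.
have bp : 0 < b by rewrite lt_def bn0 b0.
have := key (- z^* / b).
rewrite rmorphM rmorphN /= conjCK fmorphV /= br.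
rewrite (_ : _ + _ = a - z * z^* / b); last by field.
by rewrite subr_ge0 ler_pdivrMr // mulrC.
Qed.
Lemma sum_enum (J : finType) (F : J -> C) :
  \sum_j F j = \sum_(r < #|J|) F (enum_val r).
Proof.
apply: (reindex (@enum_val J (pred_of_simpl predT))).
by exists (@enum_rank J) => x _; [rewrite enum_valK | rewrite enum_rankK].
Qed.

Lemma psd_decomp (J : finType) (G : op R J) : psd G ->
  exists (P : 'I_#|J| -> J -> C) (d : 'I_#|J| -> C),
    (forall m, 0 <= d m) /\
    (forall j j', G j j' = \sum_m (P m j)^* * d m * P m j').
Proof.
move=> pG.
pose A : 'M[C]_#|J| := \matrix_(r, s) G (enum_val r) (enum_val s).
have Ah : A \is hermsymmx.
  apply/is_hermitianmxP; apply/matrixP => r s.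
  by rewrite !mxE expr0 mul1r (psd_herm pG).
have /orthomx_spectralP AE := hermitian_normalmx Ah.
set U := spectralmx A in AE; set D := spectral_diag A in AE.
have Uu : U \is unitarymx := spectral_unitarymx A.
rewrite invmx_unitary // in AE.
exists (fun m j => U m (enum_rank j)), (fun m => D 0 m); split.
- move=> m.
  have DE : U *m A *m map_mx (@Num.conj_op _) (U^T) = diag_mx D.
    rewrite AE !mulmxA; move/unitarymxP: (Uu) => UU.
    by rewrite UU mul1mx -mulmxA UU mulmx1.
  have := qf_ge0 (fun j => (U m (enum_rank j))^*) pG.
  rewrite /qf /bf sum_enum.
  have -> : D 0 m = (diag_mx D) m m by rewrite mxE eqxx mulr1n.
  rewrite -DE.
  have -> : (U *m A *m map_mx (@Num.conj_op _) (U^T)) m m =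
      \sum_r \sum_s U m r * A r s * (U m s)^*.
    rewrite mxE; under eq_bigr => s _ do rewrite !mxE big_distrl /=.
    rewrite exchange_big /=; apply: eq_bigr => r _; apply: eq_bigr => s _.
    by rewrite !mxE.
  congr (_ <= _); apply: eq_bigr => r _; rewrite sum_enum; apply: eq_bigr => s _.
  by rewrite !mxE !enum_valK conjCK.
- move=> j j'.
  have -> : G j j' = A (enum_rank j) (enum_rank j') by rewrite mxE !enum_rankK.
  rewrite AE mul_mx_diag !mxE; apply: eq_bigr => m _.
  by rewrite !mxE.
Qed.
Lemma sum_pair (I J : finType) (F : (I * J)%type -> C) :
  \sum_p F p = \sum_i \sum_j F (i, j).
Proof. by rewrite pair_bigA; apply: eq_bigr => -[]. Qed.

Definition tens (I J : finType) (F : op R I) (G : op R J) : op R (I * J)%type :=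
  fun x y => F x.1 y.1 * G x.2 y.2.

Lemma psd_tens (I J : finType) (F : op R I) (G : op R J) :
  psd F -> psd G -> psd (tens F G).
Proof.
move=> pF /psd_decomp [P [d [d0 HG]]]; apply/psdE => v.
pose w m i := \sum_j P m j * v (i, j).
have -> : qf (tens F G) v = \sum_m d m * qf F (w m).
  rewrite /qf /bf /tens.
  under eq_bigr => x _ do under eq_bigr => y _ do
    rewrite HG !mulr_sumr mulr_suml.
  under eq_bigr => x _ do rewrite exchange_big /=.
  rewrite exchange_big /=; apply: eq_bigr => m _.
  rewrite mulr_sumr sum_pair; apply: eq_bigr => i _.
  rewrite exchange_big sum_pair mulr_sumr; apply: eq_bigr => i' _.
  rewrite /w rmorph_sum /= !mulr_sumr; apply: eq_bigr => j' _.
  rewrite !mulr_suml mulr_sumr; apply: eq_bigr => j _.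
  rewrite rmorphM /=; ring.
by apply: sumr_ge0 => m _; apply: mulr_ge0 => //; apply: qf_ge0.
Qed.
Lemma psd_ext (I : finType) (K K' : op R I) :
  (forall i j, K i j = K' i j) -> psd K -> psd K'.
Proof.
move=> E /psdE H; apply/psdE => u; have := H u.
by rewrite /qf /bf; under eq_bigr do under eq_bigr do rewrite E.
Qed.

Lemma sum4_swap (A B D E : finType) (F : A -> B -> D -> E -> C) :
  \sum_a \sum_b \sum_c \sum_d F a b c d = \sum_c \sum_d \sum_a \sum_b F a b c d.
Proof.
rewrite pair_bigA /=.
under eq_bigr => p _ do rewrite pair_bigA /=.
rewrite exchange_big /= [RHS]pair_bigA /=.
by apply: eq_bigr => q _; rewrite pair_bigA.
Qed.

Lemma psd_sand (T I Kk : finType) (K : op R T) (M : Kk -> I -> T -> C) :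
  psd K -> psd (fun i i' => \sum_k \sum_t \sum_t' M k i t * K t t' * (M k i' t')^*).
Proof.
move=> pK; apply/psdE => u.
pose w k t := \sum_i (M k i t)^* * u i.
have -> : qf (fun i i' => \sum_k \sum_t \sum_t' M k i t * K t t' * (M k i' t')^*) u
    = \sum_k qf K (w k).
  rewrite /qf /bf.
  under eq_bigr => i _ do under eq_bigr => i' _ do rewrite mulr_sumr mulr_suml.
  under eq_bigr => i _ do rewrite exchange_big /=.
  rewrite exchange_big /=; apply: eq_bigr => k _.
  rewrite /w.
  under [RHS]eq_bigr => t _ do under eq_bigr => t' _ do
    rewrite rmorph_sum /= mulr_suml big_distrlr /=.
  rewrite sum4_swap; apply: eq_bigr => i _; apply: eq_bigr => i' _.
  rewrite mulr_sumr mulr_suml; apply: eq_bigr => t _.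
  rewrite mulr_sumr mulr_suml; apply: eq_bigr => t' _.
  rewrite !rmorphM /= conjCK; ring.
by apply: sumr_ge0 => k _; apply: qf_ge0.
Qed.

Lemma psd_delta (I : finType) : psd (fun i j : I => (i == j)%:R : C).
Proof.
apply/psdE => u; rewrite /qf /bf; apply: sumr_ge0 => i _.
rewrite (eq_bigr (fun j => (i == j)%:R * ((u i)^* * u j))).
  by rewrite sum_delta'; rewrite mulrC; apply: mul_conjC_ge0.
by move=> j _; ring.
Qed.

Lemma psd_pull (S T : finType) (K : op R T) (f : S -> T) :
  psd K -> psd (fun s s' => K (f s) (f s')).
Proof.
move=> pK; apply: psd_ext (psd_sand (fun (k : unit) s t => (t == f s)%:R : C) pK).
move=> s s'; rewrite (big_pred1 tt); last by case.
under eq_bigr => t _ do under eq_bigr => t' _ do rewrite conjC_nat.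
rewrite (eq_bigr (fun t => (t == f s)%:R * K t (f s'))).
  by rewrite sum_delta.
move=> t _; rewrite (eq_bigr (fun t' => (t' == f s')%:R * ((t == f s)%:R * K t t'))).
  by rewrite sum_delta.
by move=> t' _; ring.
Qed.

Definition ptr1 (I J : finType) (K : op R (I * J)%type) : op R J :=
  fun j j' => \sum_i K (i, j) (i, j').
Definition ptr2 (I J : finType) (K : op R (I * J)%type) : op R I :=
  fun i i' => \sum_j K (i, j) (i', j).

Lemma psd_ptr2 (I J : finType) (K : op R (I * J)%type) : psd K -> psd (ptr2 K).
Proof.
move=> pK; apply: psd_ext (psd_sand (fun (k : J) (i : I) t => (t == (i, k))%:R : C) pK).
move=> i i'; rewrite /ptr2; apply: eq_bigr => j _.
under eq_bigr => t _ do under eq_bigr => t' _ do rewrite conjC_nat.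
rewrite (eq_bigr (fun t => (t == (i, j))%:R * K t (i', j))).
  by rewrite sum_delta.
move=> t _; rewrite (eq_bigr (fun t' => (t' == (i', j))%:R * ((t == (i, j))%:R * K t t'))).
  by rewrite sum_delta.
by move=> t' _; ring.
Qed.

Lemma psd_ptr1 (I J : finType) (K : op R (I * J)%type) : psd K -> psd (ptr1 K).
Proof.
move=> pK; apply: psd_ext (psd_sand (fun (k : I) (j : J) t => (t == (k, j))%:R : C) pK).
move=> j j'; rewrite /ptr1; apply: eq_bigr => i _.
under eq_bigr => t _ do under eq_bigr => t' _ do rewrite conjC_nat.
rewrite (eq_bigr (fun t => (t == (i, j))%:R * K t (i, j'))).
  by rewrite sum_delta.
move=> t _; rewrite (eq_bigr (fun t' => (t' == (i, j'))%:R * ((t == (i, j))%:R * K t t'))).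
  by rewrite sum_delta.
by move=> t' _; ring.
Qed.
Lemma bf_blk (X Y : finType) (T : op R X) (g h : Y -> X) :
  bf (tens (fun i j : Y => (i == j)%:R : C) T)
     (fun p => (p.2 == g p.1)%:R) (fun p => (p.2 == h p.1)%:R)
  = \sum_y T (g y) (h y).
Proof.
rewrite /bf /tens sum_pair; apply: eq_bigr => y _.
rewrite (eq_bigr (fun x => (x == g y)%:R * \sum_(q : Y * X) (y == q.1)%:R * T x q.2 * (q.2 == h q.1)%:R)).
  rewrite sum_delta sum_pair (eq_bigr (fun y' => (y == y')%:R * T (g y) (h y'))).
    by rewrite sum_delta'.
  move=> y' _; rewrite (eq_bigr (fun x' => (x' == h y')%:R * ((y == y')%:R * T (g y) x'))).
    by rewrite sum_delta.
  by move=> x' _ /=; ring.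
by move=> x _ /=; rewrite mulr_sumr; apply: eq_bigr => q _;
   rewrite conjC_nat; ring.
Qed.

Lemma CS_blk (X Y : finType) (T : op R X) (g h : Y -> X) : psd T ->
  `|\sum_y T (g y) (h y)| ^+ 2 <=
    (\sum_y T (g y) (g y)) * (\sum_y T (h y) (h y)).
Proof.
move=> pT; have pB := psd_tens (@psd_delta Y) pT.
have := CS (fun p => (p.2 == g p.1)%:R) (fun p => (p.2 == h p.1)%:R) pB.
by rewrite /qf !bf_blk.
Qed.
Definition trace' (I : finType) (K : op R I) := \sum_i K i i.

Lemma sum_pair2 (I J : finType) (F : I -> J -> C) :
  \sum_i \sum_j F i j = \sum_(p : I * J) F p.1 p.2.
Proof. exact: pair_bigA. Qed.

Lemma big_mul2 (A B : finType) (F : A -> C) (G : B -> C) :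
  (\sum_a F a) * (\sum_b G b) = \sum_(p : A * B) F p.1 * G p.2.
Proof. by rewrite big_distrlr pair_bigA. Qed.

Lemma prod3 (O1 O2 O3 K1 K2 K3 : finType) (A : O1 -> K1 -> C) (B : O2 -> K2 -> C)
  (D : O3 -> K3 -> C) :
  \sum_(x : (O1 * O2) * O3) \sum_(k : (K1 * K2) * K3)
     A x.1.1 k.1.1 * B x.1.2 k.1.2 * D x.2 k.2 =
  (\sum_o \sum_k A o k) * (\sum_o \sum_k B o k) * (\sum_o \sum_k D o k).
Proof.
rewrite (sum_pair2 (fun (x : (O1 * O2) * O3) (k : (K1 * K2) * K3) =>
  A x.1.1 k.1.1 * B x.1.2 k.1.2 * D x.2 k.2)).
rewrite (sum_pair2 A) (sum_pair2 B) (sum_pair2 D) !big_mul2 /=.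
rewrite (reindex (fun p : ((O1 * K1) * (O2 * K2)) * (O3 * K3) =>
   (((p.1.1.1, p.1.2.1), p.2.1), ((p.1.1.2, p.1.2.2), p.2.2)))) /=.
  by apply: eq_bigr => -[[[? ?] [? ?]] [? ?]] _.
exists (fun q : ((O1 * O2) * O3) * ((K1 * K2) * K3) =>
   (((q.1.1.1, q.2.1.1), (q.1.1.2, q.2.1.2)), (q.1.2, q.2.2))).
  by move=> [[[? ?] [? ?]] [? ?]].
by move=> [[[? ?] ?] [[? ?] ?]].
Qed.

Lemma trace_ptr1 (I J : finType) (K : op R (I * J)%type) :
  trace K = \sum_j ptr1 K j j.
Proof. by rewrite /trace /ptr1 sum_pair exchange_big. Qed.

Lemma trace_ptr2 (I J : finType) (K : op R (I * J)%type) :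
  trace K = \sum_i ptr2 K i i.
Proof. by rewrite /trace /ptr2 sum_pair. Qed.

Lemma ptr2_tens (I J : finType) (F : op R I) (G : op R J) i i' :
  ptr2 (tens F G) i i' = F i i' * trace G.
Proof. by rewrite /ptr2 /trace mulr_sumr. Qed.

Lemma ptr1_tens (I J : finType) (F : op R I) (G : op R J) j j' :
  ptr1 (tens F G) j j' = trace F * G j j'.
Proof. by rewrite /ptr1 /trace mulr_suml. Qed.

Lemma split1 (F : ((bool * bool) * bool)%type -> C) :
  \sum_x F x = \sum_b \sum_(y : bool * bool) F ((b, y.1), y.2).
Proof.
rewrite sum_pair sum_pair; apply: eq_bigr => b _.
by rewrite sum_pair.
Qed.

Lemma sum_pairR (I J : finType) (F : (I * J)%type -> R) :
  \sum_p F p = \sum_i \sum_j F (i, j).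
Proof. by rewrite pair_bigA; apply: eq_bigr => -[]. Qed.

Lemma split1R (F : ((bool * bool) * bool)%type -> R) :
  \sum_x F x = \sum_b \sum_(y : bool * bool) F ((b, y.1), y.2).
Proof.
rewrite sum_pairR sum_pairR; apply: eq_bigr => b _.
by rewrite sum_pairR.
Qed.

Lemma split3R (F : ((bool * bool) * bool)%type -> R) :
  \sum_x F x = \sum_b \sum_(y : bool * bool) F (y, b).
Proof.
rewrite sum_pairR exchange_big; apply: eq_bigr => b _.
by rewrite sum_pairR.
Qed.

Local Notation Rc := (@complex.Re R).
Local Notation Ic := (@complex.Im R).
Local Notation toC x := (real_complex R x).

Lemma ReD (x y : C) : Rc (x + y) = Rc x + Rc y.
Proof. by case: x => ? ?; case: y => ? ?. Qed.

Lemma Rc_scale (r : R) (z : C) : Rc (toC r * z) = r * Rc z.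
Proof. by case: z => a b /=; rewrite mul0r subr0. Qed.

Lemma Rc_sum (I : finType) (F : I -> C) : Rc (\sum_i F i) = \sum_i Rc (F i).
Proof. exact: (big_morph _ ReD). Qed.

Lemma RcB (x y : C) : Rc (x - y) = Rc x - Rc y.
Proof. by case: x => ? ?; case: y => ? ?. Qed.

Lemma normc2 (z : C) : `|z| ^+ 2 = toC ((Rc z) ^+ 2 + (Ic z) ^+ 2).
Proof.
rewrite normc_def -rmorphXn /= sqr_sqrtr //.
by rewrite addr_ge0 // sqr_ge0.
Qed.

Lemma real_geC (z : C) : 0 <= z -> z = toC (Rc z).
Proof. by move=> /ger0_real /RRe_real. Qed.

Lemma final_real (L : finType) (p x a c e : L -> R) :
  (forall l, 0 <= p l) -> \sum_l p l = 1 ->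
  (forall l, x l ^+ 2 <= 1 - a l ^+ 2) -> (forall l, e l <= a l * c l) ->
  (forall l, -1 <= c l <= 1) -> 0 <= \sum_l p l * e l ->
  (\sum_l p l * x l) ^+ 2 + (\sum_l p l * e l) ^+ 2 <= 1.
Proof.
move=> p0 p1 hx he hc E0.
set E := \sum_l p l * e l in E0 *.
set xa := \sum_l p l * `|x l|.
have xa0 : 0 <= xa by apply: sumr_ge0 => l _; rewrite mulr_ge0.
set m := xa ^+ 2 + E ^+ 2.
have m0 : 0 <= m by rewrite addr_ge0 ?sqr_ge0.
have hw : forall l, xa * `|x l| + E * e l <= Num.sqrt m.
  move=> l; have ea : e l <= `|a l|.
    apply: (le_trans (he l)); apply: (le_trans (ler_norm _)).
    rewrite normrM -[X in _ <= X]mulr1 ler_wpM2l //.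
    by case/andP: (hc l) => h1 h2; rewrite ler_norml h1 h2.
  apply: (@le_trans _ _ (xa * `|x l| + E * `|a l|)).
    by rewrite lerD2l ler_wpM2l.
  set w := xa * `|x l| + E * `|a l|.
  have wsq : w ^+ 2 <= m.
    have hxa : x l ^+ 2 + a l ^+ 2 <= 1 by have := hx l; rewrite lerBrDr.
    have := sqr_ge0 (xa * `|a l| - E * `|x l|).
    have := sqr_ge0 xa; have := sqr_ge0 E.
    rewrite -(real_normK (num_real (x l))) -(real_normK (num_real (a l))) in hxa.
    rewrite /w /m; move: (`|x l|) (`|a l|) hxa => u v huv h1 h2 h3.
    nra.
  by apply: (le_trans (ler_norm w)); rewrite -(sqrtr_sqr w); exact: ler_wsqrtr.
have hm : m <= Num.sqrt m.
  have hmE : m = \sum_l p l * (xa * `|x l| + E * e l).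
    have -> : m = xa * (\sum_l p l * `|x l|) + E * (\sum_l p l * e l).
      by rewrite /m !expr2.
    by rewrite !mulr_sumr -big_split; apply: eq_bigr => l _ /=; ring.
  rewrite {1}hmE.
  apply: (@le_trans _ _ (\sum_l p l * Num.sqrt m)).
    by apply: ler_sum => l _; rewrite ler_wpM2l.
  by rewrite -mulr_suml p1 mul1r.
have m1 : m <= 1.
  have s0 := sqrtr_ge0 m; have s2 := sqr_sqrtr m0.
  move: (Num.sqrt m) s0 s2 hm => t t0 t2 htm; rewrite -t2 in htm *; nra.
have hsx : (\sum_l p l * x l) ^+ 2 <= xa ^+ 2.
  rewrite -(real_normK (num_real _)); rewrite lerXn2r ?nnegrE //.
  apply: (le_trans (ler_norm_sum _ _ _)); apply: ler_sum => l _.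
  by rewrite normrM ger0_norm.
by apply: le_trans m1; rewrite /m lerD2r.
Qed.


Definition sg (b : bool) : C := if b then -1 else 1.
Definition one (b : bool) : C := 1.
Definition flip (x : ((bool * bool) * bool)%type) : ((bool * bool) * bool)%type := ((~~ x.1.1, ~~ x.1.2), ~~ x.2).
Local Notation X3 := ((bool * bool) * bool)%type.

Lemma tens3_ZZI i j : tens3 (pauliZ R) (pauliZ R) (id2 R) i j =
  (i == j)%:R * (sg i.1.1 * sg i.1.2 * one i.2).
Proof.
by case: i => [[[] []] []]; case: j => [[[] []] []];
  rewrite /tens3 /pauliZ /id2 /sg /one /=; ring.
Qed.

Lemma tens3_IZZ i j : tens3 (id2 R) (pauliZ R) (pauliZ R) i j =
  (i == j)%:R * (one i.1.1 * sg i.1.2 * sg i.2).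
Proof.
by case: i => [[[] []] []]; case: j => [[[] []] []];
  rewrite /tens3 /pauliZ /id2 /sg /one /=; ring.
Qed.

Lemma tens3_XXX i j : tens3 (pauliX R) (pauliX R) (pauliX R) i j =
  (j == flip i)%:R.
Proof.
by case: i => [[[] []] []]; case: j => [[[] []] []];
  rewrite /tens3 /pauliX /flip /=; ring.
Qed.

Lemma expect_diag (I : finType) (O : op R I) (d : I -> C) (rho : op R I) :
  (forall i j, O i j = (i == j)%:R * d i) ->
  expect O rho = \sum_i d i * rho i i.
Proof.
move=> hO; rewrite /expect; apply: eq_bigr => i _.
rewrite (eq_bigr (fun j => (i == j)%:R * (d i * rho j i))).
  by rewrite sum_delta'.
by move=> j _; rewrite hO; ring.
Qed.

Lemma expect_XXX (rho : op R X3) :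
  expect (tens3 (pauliX R) (pauliX R) (pauliX R)) rho = \sum_x rho (flip x) x.
Proof.
rewrite /expect; apply: eq_bigr => i _.
rewrite (eq_bigr (fun j => (j == flip i)%:R * rho j i)).
  by rewrite sum_delta.
by move=> j _; rewrite tens3_XXX.
Qed.

Lemma expect_mix (I L : finType) (O rho : op R I) (p : L -> R) (T : L -> op R I) :
  (forall x y, rho x y = \sum_l toC (p l) * T l x y) ->
  expect O rho = \sum_l toC (p l) * expect O (T l).
Proof.
move=> hr; rewrite /expect.
under eq_bigr => i _ do under eq_bigr => j _ do rewrite hr mulr_sumr.
under eq_bigr => i _ do rewrite exchange_big /=.
rewrite exchange_big /=; apply: eq_bigr => l _.
rewrite mulr_sumr; apply: eq_bigr => i _; rewrite mulr_sumr.
by apply: eq_bigr => j _; ring.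
Qed.

Lemma flipK : involutive flip.
Proof. by case=> [[? ?] ?]; rewrite /flip /= !negbK. Qed.

Lemma XXX_real (rho : op R X3) : psd rho ->
  \sum_x rho (flip x) x = toC (Rc (\sum_x rho (flip x) x)).
Proof.
move=> /psd_herm H; apply/esym/RRe_real; rewrite CrealE; apply/eqP.
rewrite rmorph_sum /=.
rewrite (reindex flip) /=; last by exists flip => ? _; rewrite flipK.
by apply: eq_bigr => x _; rewrite -H flipK.
Qed.
Section Tri.
Variables (aB aC bA bC cA cB KA KB KC : finType).
Variables (EA : KA -> bool -> (bA * cA)%type -> C)
          (EB : KB -> bool -> (aB * cB)%type -> C)
          (EC : KC -> bool -> (aC * bC)%type -> C).
Local Notation IA := (bA * cA)%type.
Local Notation IB := (aB * cB)%type.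
Local Notation IC := (aC * bC)%type.
Local Notation J := ((IA * IB) * IC)%type.
Local Notation X3 := ((bool * bool) * bool)%type.
Local Notation KK := ((KA * KB) * KC)%type.

Definition sig (ra : op R (aB * aC)%type) (rb : op R (bA * bC)%type)
  (rc : op R (cA * cB)%type) : op R J := fun i j =>
  ra (i.1.2.1, i.2.1) (j.1.2.1, j.2.1) * rb (i.1.1.1, i.2.2) (j.1.1.1, j.2.2) *
  rc (i.1.1.2, i.1.2.2) (j.1.1.2, j.1.2.2).

Definition Ek (k : KK) (x : X3) (i : J) : C :=
  EA k.1.1 x.1.1 i.1.1 * EB k.1.2 x.1.2 i.1.2 * EC k.2 x.2 i.2.

Definition tau (s : op R J) : op R X3 := fun x y =>
  \sum_k \sum_i \sum_j Ek k x i * s i j * (Ek k y j)^*.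

Lemma tri_tau ra rb rc x y :
  tri_out EA EB EC ra rb rc x y = tau (sig ra rb rc) x y.
Proof.
rewrite /tri_out /tau [RHS]sum_pair [RHS]sum_pair; apply: eq_bigr => kA _.
apply: eq_bigr => kB _; apply: eq_bigr => kC _.
apply: eq_bigr => i _; apply: eq_bigr => j _.
by rewrite /Ek /sig !conjcE !rmorphM.
Qed.

Lemma psd_sig ra rb rc : psd ra -> psd rb -> psd rc -> psd (sig ra rb rc).
Proof.
move=> pa pb pc; have := psd_pull
  (fun i : J => (((i.1.2.1, i.2.1), (i.1.1.1, i.2.2)), (i.1.1.2, i.1.2.2)))
  (psd_tens (psd_tens pa pb) pc).
by apply: psd_ext.
Qed.

Lemma psd_tau s : psd s -> psd (tau s).
Proof. by move=> ps; apply: (psd_sand Ek ps). Qed.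

Lemma tau_diag_ge0 s x : psd s -> 0 <= tau s x x.
Proof.
move=> /psd_tau /psdE /(_ (fun k => (k == x)%:R)).
by rewrite /qf bf_delta.
Qed.
Definition Fp (K I : finType) (E : K -> bool -> I -> C) (f : bool -> C) : op R I :=
  fun i j => \sum_o f o * \sum_k E k o i * (E k o j)^*.

Definition V (s : op R J) (GA : op R IA) (GB : op R IB) (GC : op R IC) :=
  \sum_i \sum_j s i j * GA i.1.1 j.1.1 * GB i.1.2 j.1.2 * GC i.2 j.2.

Lemma tau_diag_sum s f1 f2 f3 :
  \sum_x f1 x.1.1 * f2 x.1.2 * f3 x.2 * tau s x x =
  V s (Fp EA f1) (Fp EB f2) (Fp EC f3).
Proof.
rewrite /tau /V.
rewrite (eq_bigr (fun x => \sum_k \sum_i \sum_j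
   f1 x.1.1 * f2 x.1.2 * f3 x.2 * (Ek k x i * s i j * (Ek k x j)^*))); last first.
  move=> x _; rewrite mulr_sumr; apply: eq_bigr => k _.
  rewrite mulr_sumr; apply: eq_bigr => i _; by rewrite mulr_sumr.
rewrite sum4_swap; apply: eq_bigr => i _; apply: eq_bigr => j _.
rewrite /Fp.
have -> : s i j *
    (\sum_o f1 o * \sum_k EA k o i.1.1 * (EA k o j.1.1)^*) *
    (\sum_o f2 o * \sum_k EB k o i.1.2 * (EB k o j.1.2)^*) *
    (\sum_o f3 o * \sum_k EC k o i.2 * (EC k o j.2)^*) =
  s i j * ((\sum_o \sum_k f1 o * (EA k o i.1.1 * (EA k o j.1.1)^*)) *
    (\sum_o \sum_k f2 o * (EB k o i.1.2 * (EB k o j.1.2)^*)) *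
    (\sum_o \sum_k f3 o * (EC k o i.2 * (EC k o j.2)^*))).
  by rewrite !mulrA; congr (_ * _ * _ * _); apply: eq_bigr => o _; rewrite mulr_sumr.
rewrite -prod3 mulr_sumr; apply: eq_bigr => x _; rewrite mulr_sumr.
apply: eq_bigr => k _; rewrite /Ek !rmorphM /=; ring.
Qed.
Lemma Fp1 (K I : finType) (E : K -> bool -> I -> C) : is_channel E ->
  forall i j, Fp E (fun _ => 1) i j = (i == j)%:R.
Proof.
move=> ch i j; have := ch j i; rewrite eq_sym => <-.
rewrite /Fp exchange_big /=; apply: eq_bigr => o _; rewrite mul1r.
by apply: eq_bigr => k _; rewrite conjcE mulrC.
Qed.

Lemma V_split s GA GB GC : V s GA GB GC =
  \sum_iA \sum_jA \sum_iB \sum_jB \sum_iC \sum_jC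
    s ((iA, iB), iC) ((jA, jB), jC) * GA iA jA * GB iB jB * GC iC jC.
Proof.
rewrite /V (sum_pair2 (fun i j => s i j * GA i.1.1 j.1.1 * GB i.1.2 j.1.2 * GC i.2 j.2)).
rewrite (reindex (fun p : (IA * IA) * ((IB * IB) * (IC * IC)) =>
   (((p.1.1, p.2.1.1), p.2.2.1), ((p.1.2, p.2.1.2), p.2.2.2)))) /=; last first.
  exists (fun q : J * J => ((q.1.1.1, q.2.1.1), ((q.1.1.2, q.2.1.2), (q.1.2, q.2.2)))).
    by move=> [[? ?] [[? ?] [? ?]]].
  by move=> [[[? ?] ?] [[? ?] ?]].
rewrite -(sum_pair2 (fun pA pBC => s ((pA.1, pBC.1.1), pBC.2.1) ((pA.2, pBC.1.2), pBC.2.2) *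
   GA pA.1 pA.2 * GB pBC.1.1 pBC.1.2 * GC pBC.2.1 pBC.2.2)) sum_pair.
apply: eq_bigr => iA _; apply: eq_bigr => jA _.
rewrite [LHS]sum_pair [LHS]sum_pair; apply: eq_bigr => iB _; apply: eq_bigr => jB _.
by rewrite sum_pair; apply: eq_bigr => iC _; apply: eq_bigr => jC _.
Qed.
Local Notation dl I := (fun i j : I => (i == j)%:R : C).

Lemma V_C ra rb rc GA GB : V (sig ra rb rc) GA GB (dl IC) =
  \sum_iA \sum_jA \sum_iB \sum_jB ptr2 ra iB.1 jB.1 * ptr2 rb iA.1 jA.1 *
     rc (iA.2, iB.2) (jA.2, jB.2) * GA iA jA * GB iB jB.
Proof.
rewrite V_split; apply: eq_bigr => iA _; apply: eq_bigr => jA _.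
apply: eq_bigr => iB _; apply: eq_bigr => jB _.
under eq_bigr => iC _ do rewrite sum_delta_r.
rewrite sum_pair /ptr2 big_distrlr /= !mulr_suml; apply: eq_bigr => x1 _.
rewrite !mulr_suml; apply: eq_bigr => x2 _.
by rewrite /sig /=; ring.
Qed.

Lemma V_A ra rb rc GB GC : V (sig ra rb rc) (dl IA) GB GC =
  \sum_iB \sum_jB \sum_iC \sum_jC ra (iB.1, iC.1) (jB.1, jC.1) *
     ptr1 rb iC.2 jC.2 * ptr1 rc iB.2 jB.2 * GB iB jB * GC iC jC.
Proof.
rewrite V_split.
rewrite (eq_bigr (fun iA => \sum_jA (iA == jA)%:R *
  \sum_iB \sum_jB \sum_iC \sum_jC sig ra rb rc (iA, iB, iC) (jA, jB, jC) *
     GB iB jB * GC iC jC)); last first.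
  move=> iA _; apply: eq_bigr => jA _.
  rewrite mulr_sumr; apply: eq_bigr => iB _; rewrite mulr_sumr.
  apply: eq_bigr => jB _; rewrite mulr_sumr; apply: eq_bigr => iC _; rewrite mulr_sumr.
  by apply: eq_bigr => jC _; ring.
under eq_bigr => iA _ do rewrite sum_delta'.
rewrite exchange_big; apply: eq_bigr => iB _.
rewrite exchange_big; apply: eq_bigr => jB _.
rewrite exchange_big; apply: eq_bigr => iC _.
rewrite exchange_big; apply: eq_bigr => jC _.
rewrite sum_pair exchange_big /ptr1 mulr_sumr !mulr_suml; apply: eq_bigr => x2 _.
rewrite mulr_sumr !mulr_suml; apply: eq_bigr => x1 _.
by rewrite /sig /=; ring.
Qed.

Lemma V_B ra rb rc GA GC : V (sig ra rb rc) GA (dl IB) GC =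
  \sum_iA \sum_jA \sum_iC \sum_jC ptr1 ra iC.1 jC.1 *
     rb (iA.1, iC.2) (jA.1, jC.2) * ptr2 rc iA.2 jA.2 * GA iA jA * GC iC jC.
Proof.
rewrite V_split; apply: eq_bigr => iA _; apply: eq_bigr => jA _.
rewrite (eq_bigr (fun iB => \sum_jB (iB == jB)%:R *
  \sum_iC \sum_jC sig ra rb rc (iA, iB, iC) (jA, jB, jC) * GA iA jA * GC iC jC));
  last first.
  move=> iB _; apply: eq_bigr => jB _; rewrite mulr_sumr; apply: eq_bigr => iC _.
  by rewrite mulr_sumr; apply: eq_bigr => jC _; ring.
under eq_bigr => iB _ do rewrite sum_delta'.
rewrite exchange_big; apply: eq_bigr => iC _.
rewrite exchange_big; apply: eq_bigr => jC _.
rewrite sum_pair /ptr1 /ptr2 !mulr_suml; apply: eq_bigr => x1 _.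
rewrite mulr_sumr !mulr_suml; apply: eq_bigr => x2 _.
by rewrite /sig /=; ring.
Qed.
Lemma V_ext s GA GB GC GA' GB' GC' :
  (forall i j, GA i j = GA' i j) -> (forall i j, GB i j = GB' i j) ->
  (forall i j, GC i j = GC' i j) -> V s GA GB GC = V s GA' GB' GC'.
Proof.
move=> hA hB hC; rewrite /V; apply: eq_bigr => i _; apply: eq_bigr => j _.
by rewrite hA hB hC.
Qed.

Lemma V_AB_C ra rb rc GA : V (sig ra rb rc) GA (dl IB) (dl IC) =
  trace ra * \sum_iA \sum_jA ptr2 rb iA.1 jA.1 * ptr2 rc iA.2 jA.2 * GA iA jA.
Proof.
rewrite V_B mulr_sumr; apply: eq_bigr => iA _; rewrite mulr_sumr.
apply: eq_bigr => jA _.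
under eq_bigr => iC _ do rewrite sum_delta_r.
rewrite sum_pair.
transitivity ((\sum_x (ptr1 ra x x)) * (\sum_y rb (iA.1, y) (jA.1, y)) *
   (ptr2 rc iA.2 jA.2 * GA iA jA)).
  rewrite big_distrlr mulr_suml; apply: eq_bigr => x _.
  rewrite mulr_suml; apply: eq_bigr => y _ /=; ring.
by rewrite trace_ptr1 /ptr2; ring.
Qed.

Lemma V_ABC_C ra rb rc GC : V (sig ra rb rc) (dl IA) (dl IB) GC =
  trace rc * \sum_iC \sum_jC ptr1 ra iC.1 jC.1 * ptr1 rb iC.2 jC.2 * GC iC jC.
Proof.
rewrite V_B.
rewrite (eq_bigr (fun iA => \sum_jA (iA == jA)%:R * \sum_iC \sum_jC
   ptr1 ra iC.1 jC.1 * rb (iA.1, iC.2) (iA.1, jC.2) * ptr2 rc iA.2 iA.2 *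
   GC iC jC)); last first.
  move=> iA _; apply: eq_bigr => jA _; rewrite mulr_sumr; apply: eq_bigr => iC _.
  rewrite mulr_sumr; apply: eq_bigr => jC _.
  by have [e|ne] := eqVneq iA jA; [rewrite e; ring | rewrite mulr0 !mul0r].
under eq_bigr => iA _ do rewrite sum_delta'.
rewrite exchange_big mulr_sumr; apply: eq_bigr => iC _.
rewrite exchange_big mulr_sumr; apply: eq_bigr => jC _.
rewrite sum_pair.
transitivity ((\sum_x rb (x, iC.2) (x, jC.2)) * (\sum_y ptr2 rc y y) *
   (ptr1 ra iC.1 jC.1 * GC iC jC)).
  rewrite big_distrlr mulr_suml; apply: eq_bigr => x _.
  rewrite mulr_suml; apply: eq_bigr => y _ /=; ring.
by rewrite trace_ptr2 /ptr1; ring.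
Qed.

Lemma V_prod ra rbA rbC rc GA GC :
  V (sig ra (tens rbA rbC) rc) GA (dl IB) GC =
  (\sum_iA \sum_jA rbA iA.1 jA.1 * ptr2 rc iA.2 jA.2 * GA iA jA) *
  (\sum_iC \sum_jC ptr1 ra iC.1 jC.1 * rbC iC.2 jC.2 * GC iC jC).
Proof.
rewrite V_B mulr_suml; apply: eq_bigr => iA _; rewrite mulr_suml.
apply: eq_bigr => jA _; rewrite mulr_sumr; apply: eq_bigr => iC _.
rewrite mulr_sumr; apply: eq_bigr => jC _.
by rewrite /tens /=; ring.
Qed.

Lemma V_tr ra rb rc : V (sig ra rb rc) (dl IA) (dl IB) (dl IC) =
  trace ra * trace rb * trace rc.
Proof.
rewrite V_AB_C -mulrA; congr (_ * _).
under eq_bigr => iA _ do rewrite sum_delta_r.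
rewrite sum_pair (trace_ptr2 rb) (trace_ptr2 rc) big_distrlr.
by apply: eq_bigr => x _; apply: eq_bigr => y _.
Qed.

Section Lam.
Hypotheses (chA : is_channel EA) (chB : is_channel EB) (chC : is_channel EC).
Variables (ra : op R (aB * aC)%type) (rb : op R (bA * bC)%type) (rc : op R (cA * cB)%type).
Hypotheses (sa : is_state ra) (sb : is_state rb) (sc : is_state rc).

Definition rb' := tens (ptr2 rb) (ptr1 rb).
Definition sg0 := sig ra rb rc.
Definition sg1 := sig ra rb' rc.

Lemma psd_sg0 : psd sg0.
Proof. by case: sa; case: sb; case: sc => *; apply: psd_sig. Qed.

Lemma psd_sg1 : psd sg1.
Proof.
case: sa; case: sb; case: sc => *; apply: psd_sig => //.
by apply: psd_tens; [apply: psd_ptr2 | apply: psd_ptr1].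
Qed.

Local Notation dsum s f1 f2 f3 := (\sum_x f1 x.1.1 * f2 x.1.2 * f3 x.2 * tau s x x).

Lemma dsumV s f1 f2 f3 : dsum s f1 f2 f3 = V s (Fp EA f1) (Fp EB f2) (Fp EC f3).
Proof. exact: tau_diag_sum. Qed.

Lemma tr1 : trace ra = 1 /\ trace rb = 1 /\ trace rc = 1.
Proof. by case: sa; case: sb; case: sc. Qed.

Lemma fact_a : dsum sg0 one one one = 1.
Proof.
rewrite dsumV (V_ext _ (Fp1 chA) (Fp1 chB) (Fp1 chC)) V_tr.
by case: tr1 => -> [-> ->]; rewrite !mul1r.
Qed.

Lemma fact_b f1 f2 : dsum sg0 f1 f2 one = dsum sg1 f1 f2 one.
Proof.
rewrite !dsumV !(@V_ext _ _ _ _ (Fp EA f1) (Fp EB f2) _ (fun _ _ => erefl) (fun _ _ => erefl) (Fp1 chC)).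
rewrite !V_C; do 4! (apply: eq_bigr => ? _).
by rewrite /rb' ptr2_tens /trace -trace_ptr1; case: tr1 => _ [-> _]; rewrite mulr1.
Qed.

Lemma fact_c f2 f3 : dsum sg0 one f2 f3 = dsum sg1 one f2 f3.
Proof.
rewrite !dsumV !(@V_ext _ _ _ _ _ (Fp EB f2) (Fp EC f3) (Fp1 chA) (fun _ _ => erefl) (fun _ _ => erefl)).
rewrite !V_A; do 4! (apply: eq_bigr => ? _).
by rewrite /rb' ptr1_tens /trace -trace_ptr2; case: tr1 => _ [-> _]; rewrite mul1r.
Qed.

Lemma fact_d f1 f3 :
  dsum sg1 f1 one f3 = dsum sg0 f1 one one * dsum sg0 one one f3.
Proof.
rewrite !dsumV.
rewrite (@V_ext _ _ _ _ (Fp EA f1) _ (Fp EC f3) (fun _ _ => erefl) (Fp1 chB) (fun _ _ => erefl)).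
rewrite (@V_ext _ _ _ _ (Fp EA f1) _ _ (fun _ _ => erefl) (Fp1 chB) (Fp1 chC)).
rewrite (@V_ext _ _ _ _ _ _ (Fp EC f3) (Fp1 chA) (Fp1 chB) (fun _ _ => erefl)).
rewrite /sg1 /rb' V_prod /sg0 V_AB_C V_ABC_C.
by case: tr1 => -> [_ ->]; rewrite !mul1r.
Qed.
Lemma sg_comb b1 b2 b3 :
  sg b1 * sg b2 * one b3 + one b1 * sg b2 * sg b3 - one b1 * one b2 * one b3
  - sg b1 * one b2 * sg b3 = - (4 * ((b2 != b1) && (b1 == b3))%:R).
Proof. by case: b1; case: b2; case: b3; rewrite /sg /one /=; ring. Qed.

Lemma fact_ineq :
  dsum sg0 sg sg one + dsum sg0 one sg sg - 1 <=
  dsum sg0 sg one one * dsum sg0 one one sg.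
Proof.
have h1 : dsum sg1 one one one = 1.
  by rewrite fact_d (_ : dsum sg0 one one one = 1) ?mulr1 //; apply: fact_a.
rewrite fact_b fact_c -fact_d -h1 -subr_le0.
rewrite -big_split /= -!sumrB /=; apply: sumr_le0 => x _.
rewrite [X in X <= 0](_ : _ = (sg x.1.1 * sg x.1.2 * one x.2 + one x.1.1 * sg x.1.2 * sg x.2 - one x.1.1 * one x.1.2 * one x.2 - sg x.1.1 * one x.1.2 * sg x.2) * tau sg1 x x); last by ring.
rewrite sg_comb mulNr oppr_le0.
apply: mulr_ge0; first by rewrite mulr_ge0 ?ler0n.
by apply: tau_diag_ge0; apply: psd_sg1.
Qed.
Definition pr x := Rc (tau sg0 x x).
Definition sgR (b : bool) : R := if b then -1 else 1.

Lemma tauR x : tau sg0 x x = toC (pr x).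
Proof. exact/real_geC/tau_diag_ge0/psd_sg0. Qed.

Lemma pr_ge0 x : 0 <= pr x.
Proof. by rewrite -ler0c -tauR; apply/tau_diag_ge0/psd_sg0. Qed.

Lemma dsum_R f1 f2 f3 (r1 r2 r3 : bool -> R) :
  (forall b, f1 b = toC (r1 b)) -> (forall b, f2 b = toC (r2 b)) ->
  (forall b, f3 b = toC (r3 b)) ->
  dsum sg0 f1 f2 f3 = toC (\sum_x r1 x.1.1 * r2 x.1.2 * r3 x.2 * pr x).
Proof.
move=> h1 h2 h3; rewrite rmorph_sum; apply: eq_bigr => x _.
by rewrite h1 h2 h3 tauR !rmorphM.
Qed.

Lemma sgC b : sg b = toC (sgR b).
Proof. by case: b; rewrite /sg /sgR /= ?rmorphN rmorph1. Qed.

Lemma oneC b : one b = toC 1.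
Proof. by rewrite /one rmorph1. Qed.

Lemma pr_sum : \sum_x pr x = 1.
Proof.
apply: (@complexI R); rewrite rmorph1 -fact_a (dsum_R oneC oneC oneC).
by apply: f_equal; apply: eq_bigr => x _; rewrite !mul1r.
Qed.

Lemma step1 : (Rc (\sum_x tau sg0 (flip x) x)) ^+ 2 <=
  1 - (\sum_x sgR x.1.1 * pr x) ^+ 2.
Proof.
pose P b := \sum_(y : bool * bool) pr ((b, y.1), y.2).
have hP : \sum_x sgR x.1.1 * pr x = P false - P true.
  rewrite split1R big_bool /= /P /sgR addrC; congr (_ + _).
    by apply: eq_bigr => y _; rewrite mul1r.
  by rewrite -sumrN; apply: eq_bigr => y _; rewrite mulN1r.
have h1 : P false + P true = 1 by rewrite -pr_sum split1R big_bool addrC.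
pose z b := \sum_(y : bool * bool) tau sg0 (flip ((b, y.1), y.2)) ((b, y.1), y.2).
have hX : \sum_x tau sg0 (flip x) x = z true + z false by rewrite split1 big_bool.
have hCS : forall b, (Rc (z b)) ^+ 2 <= P (~~ b) * P b.
  move=> b; have := CS_blk (fun y : bool * bool => flip ((b, y.1), y.2))
    (fun y : bool * bool => ((b, y.1), y.2)) (psd_tau psd_sg0).
  have -> : \sum_(y : bool * bool) tau sg0 ((b, y.1), y.2) ((b, y.1), y.2) = toC (P b).
    by rewrite rmorph_sum; apply: eq_bigr => y _; rewrite tauR.
  have -> : \sum_(y : bool * bool) tau sg0 (flip ((b, y.1), y.2)) (flip ((b, y.1), y.2))
      = toC (P (~~ b)).
    rewrite rmorph_sum /=.
    rewrite (reindex (fun y : bool * bool => (~~ y.1, ~~ y.2))) /=; last first.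
      by exists (fun y : bool * bool => (~~ y.1, ~~ y.2)) => -[? ?] _ /=; rewrite !negbK.
    by apply: eq_bigr => y _; rewrite /flip /= !negbK tauR.
  rewrite -/(z b) normc2 -rmorphM lecR => h.
  by apply: le_trans h; rewrite lerDl sqr_ge0.
rewrite hX ReD hP.
have := hCS true; have := hCS false; rewrite /= => ha hb.
have := sqr_ge0 (Rc (z true) - Rc (z false)).
have p0 : 0 <= P false by apply: sumr_ge0 => y _; apply: pr_ge0.
have p1 : 0 <= P true by apply: sumr_ge0 => y _; apply: pr_ge0.
move: (Rc (z true)) (Rc (z false)) (P true) (P false) ha hb h1 p0 p1 => u v a b.
move=> ha hb h1 p0 p1 hs; nra.
Qed.
Definition aR := \sum_x sgR x.1.1 * 1 * 1 * pr x.
Definition cR := \sum_x 1 * 1 * sgR x.2 * pr x.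
Definition e1R := \sum_x sgR x.1.1 * sgR x.1.2 * 1 * pr x.
Definition e2R := \sum_x 1 * sgR x.1.2 * sgR x.2 * pr x.

Lemma lam_X : (Rc (\sum_x tau sg0 (flip x) x)) ^+ 2 <= 1 - aR ^+ 2.
Proof.
rewrite /aR (eq_bigr (fun x => sgR x.1.1 * pr x)); first exact: step1.
by move=> x _; rewrite !mulr1.
Qed.

Lemma lam_ineq : e1R + e2R - 1 <= aR * cR.
Proof.
have := fact_ineq.
rewrite (dsum_R sgC sgC oneC) (dsum_R oneC sgC sgC) (dsum_R sgC oneC oneC).
rewrite (dsum_R oneC oneC sgC) (_ : 1 = toC 1) ?rmorph1 // -rmorphD -rmorphB -rmorphM lecR.
by rewrite /e1R /e2R /aR /cR.
Qed.

Lemma lam_c : -1 <= cR <= 1.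
Proof.
have h : forall x, - pr x <= 1 * 1 * sgR x.2 * pr x <= pr x.
  move=> x; have := pr_ge0 x; rewrite !mul1r /sgR.
  by case: (x.2) => h; rewrite ?mulN1r ?mul1r lexx ?andbT ?lerNl ?opprK ?ge0_cp ?h.
have lo : - (\sum_x pr x) <= cR.
  by rewrite -sumrN; apply: ler_sum => x _; case/andP: (h x).
have hi : cR <= \sum_x pr x.
  by apply: ler_sum => x _; case/andP: (h x).
by rewrite pr_sum in lo hi; rewrite lo hi.
Qed.

Lemma lam_e1 : expect (tens3 (pauliZ R) (pauliZ R) (id2 R)) (tau sg0) = toC e1R.
Proof. by rewrite (expect_diag _ tens3_ZZI) (dsum_R sgC sgC oneC). Qed.

Lemma lam_e2 : expect (tens3 (id2 R) (pauliZ R) (pauliZ R)) (tau sg0) = toC e2R.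
Proof. by rewrite (expect_diag _ tens3_IZZ) (dsum_R oneC sgC sgC). Qed.
End Lam.
End Tri.
End Gen.

Theorem mainTheorem6 (R : rcfType) (rho : op R (bool * bool * bool)%type) :
  is_state rho ->
  triangle_preparable rho ->
  0 <= expect (tens3 (pauliZ R) (pauliZ R) (id2 R)) rho
       + expect (tens3 (id2 R) (pauliZ R) (pauliZ R)) rho - 1 ->
  (expect (tens3 (pauliX R) (pauliX R) (pauliX R)) rho) ^+ 2
  + (expect (tens3 (pauliZ R) (pauliZ R) (id2 R)) rho
     + expect (tens3 (id2 R) (pauliZ R) (pauliZ R)) rho - 1) ^+ 2 <= 1.
Proof.
move=> [prho trho] [aB [aC [bA [bC [cA [cB [ra [rb [rc [[sa sb sc]]]]]]]]]]].
move=> [L [KA [KB [KC [p [EA [EB [EC [p0 p1 ch hrho]]]]]]]]].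
have hr : forall x y, rho x y =
    \sum_l ((p l)%:C)%C * tau (EA l) (EB l) (EC l) (sg0 ra rb rc) x y.
  by move=> x y; rewrite hrho; apply: eq_bigr => l _; rewrite tri_tau.
have chA l := (ch l).1. have chB l := (ch l).2.1. have chC l := (ch l).2.2.
pose tl l := tau (EA l) (EB l) (EC l) (sg0 ra rb rc).
pose e1 l := e1R (EA l) (EB l) (EC l) ra rb rc.
pose e2 l := e2R (EA l) (EB l) (EC l) ra rb rc.
pose xl l := complex.Re (\sum_x tl l (flip x) x).
have hE1 : expect (tens3 (pauliZ R) (pauliZ R) (id2 R)) rho =
    ((\sum_l p l * e1 l)%:C)%C.
  rewrite (expect_mix _ hr) rmorph_sum; apply: eq_bigr => l _.
  by rewrite (lam_e1 _ _ _ sa sb sc) rmorphM.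
have hE2 : expect (tens3 (id2 R) (pauliZ R) (pauliZ R)) rho =
    ((\sum_l p l * e2 l)%:C)%C.
  rewrite (expect_mix _ hr) rmorph_sum; apply: eq_bigr => l _.
  by rewrite (lam_e2 _ _ _ sa sb sc) rmorphM.
have hX : expect (tens3 (pauliX R) (pauliX R) (pauliX R)) rho =
    ((\sum_l p l * xl l)%:C)%C.
  rewrite expect_XXX (XXX_real prho) -expect_XXX (expect_mix _ hr).
  rewrite Rc_sum; congr (real_complex R _); apply: eq_bigr => l _.
  by rewrite Rc_scale expect_XXX.
have hE : ((\sum_l p l * e1 l)%:C)%C + ((\sum_l p l * e2 l)%:C)%C - 1 =
    ((\sum_l p l * (e1 l + e2 l - 1))%:C)%C.
  rewrite -rmorphD (_ : 1 = ((1 : R)%:C)%C) ?rmorph1 // -rmorphB; congr (real_complex R _).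
  rewrite -{1}p1 -big_split -sumrB; apply: eq_bigr => l _ /=; ring.
rewrite hE1 hE2 hX hE -!rmorphXn -rmorphD ler0c.
have -> : (1 : R[i]) = ((1 : R)%:C)%C by rewrite rmorph1.
rewrite lecR => E0.
apply: final_real => // l.
- exact: (lam_X (chA l) (chB l) (chC l) sa sb sc).
- exact: (lam_ineq (chA l) (chB l) (chC l) sa sb sc).
- exact: (lam_c (chA l) (chB l) (chC l) sa sb sc).
Qed.
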